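(* Let $m\ge 2$. For every $N\ge m$ and every integer $d$ with $1\le d\le N-m+1$, the degree of the vertex $v_m$ in the RRH of size $N$ satisfies $$\Pr[d(v_m)=d]=(m-1)\,\frac{\Gamma(N-d)\,\Gamma(N-m+1)}{\Gamma(N-d-m+2)\,\Gamma(N)}.$$ In particular, for $m=2$ the degree of $v_2$ is uniformly distributed on $\{1,\dots,N-1\}$, and for $m=3$, $\Pr[d(v_3)=d]=\frac{2(N-d-1)}{(N-1)(N-2)}$.
   Context: A random recursive hypergraph (RRH) is the random hypergraph process defined as follows. At size $N=1$ it has vertex set $\{v_1\}$ and edge set $\{\{v_1\}\}$. Given the hypergraph of size $N$ (vertices $v_1,\dots,v_N$, exactly $N$ edges), one chooses an existing edge $e$ uniformly at random, independently of the past, and adds a new vertex $v_{N+1}$ together with the new edge $e\cup\{v_{N+1}\}$. The degree $d(v)$ of a vertex $v$ is the number of edges containing it. *)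

(* Defs.v *)
From mathcomp Require Import all_boot all_order all_algebra.
Set Implicit Arguments. Unset Strict Implicit. Unset Printing Implicit Defensive.
Import Order.TTheory GRing.Theory Num.Theory.

(* Vertices are the naturals 1, 2, ..., N (v_i is i).  Edges are listed in
   creation order; edge k (1-indexed) is created when going from size k-1 to
   size k.  A hypergraph of size N is determined by the sequence of choices
   c_1, ..., c_{N-1}, where c_k in {1,...,k} is the (1-indexed) edge chosen
   when growing from size k to size k+1. *)

Definition rrh_step (E : seq (seq nat)) (ch : nat) : seq (seq nat) :=
  rcons E (rcons (nth [::] E ch.-1) (size E).+1).

(* Edges of the hypergraph generated by the choice sequence c
   (size of the hypergraph = size c + 1). *)
Definition rrh_edges (c : seq nat) : seq (seq nat) :=
  foldl rrh_step [:: [:: 1%N]] c.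

Definition rrh_degree (c : seq nat) (v : nat) : nat :=
  count (fun e => v \in e) (rrh_edges c).

Fixpoint choice_seqs (n : nat) : seq (seq nat) :=
  match n with
  | 0 => [:: [::]]
  | n'.+1 => [seq rcons s k | s <- choice_seqs n', k <- iota 1 n'.+1]
  end.

(* Probability of a given choice sequence: the k-th choice is uniform among
   k edges, independently of the past. *)
Definition seq_prob {R : numFieldType} (s : seq nat) : R :=
  \prod_(i < size s) (i.+1%:R)^-1.

Definition rrh_prob {R : numFieldType} (N : nat) (ev : seq nat -> bool) : R :=
  \sum_(s <- choice_seqs N.-1) seq_prob s * (ev s)%:R.

(* Gamma function at positive integers: Gamma(n) = (n-1)!. *)
Definition GammaN {R : numFieldType} (n : nat) : R := (n.-1)`!%:R.

(* Main.v *)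
Require Import Defs.
From mathcomp Require Import all_boot all_order all_algebra.
From mathcomp Require Import zify ring lra.
Import Order.TTheory GRing.Theory Num.Theory.

Lemma size_choice n s : s \in choice_seqs n -> size s = n.
Proof.
elim: n s => [|n IH] s; first by rewrite inE => /eqP->.
by move=> /allpairsP [[s' k] /= [Hs _ ->]]; rewrite size_rcons (IH _ Hs).
Qed.

Lemma size_choice_seqs n : size (choice_seqs n) = n`!.
Proof.
elim: n => [//|n IH].
by rewrite size_allpairs IH size_iota factS mulnC.
Qed.

Lemma size_edges s : size (rrh_edges s) = (size s).+1.
Proof.
elim/last_ind: s => [//|s k IH].
by rewrite /rrh_edges foldl_rcons -/(rrh_edges s) /rrh_step size_rcons IH size_rcons.
Qed.

Lemma edges_bound s e x : e \in rrh_edges s -> x \in e -> x <= (size s).+1.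
Proof.
elim/last_ind: s e => [|s k IH] e.
  by rewrite inE => /eqP-> ; rewrite inE => /eqP->.
rewrite /rrh_edges foldl_rcons -/(rrh_edges s) /rrh_step mem_rcons inE size_rcons.
case/orP => [/eqP->|He].
  rewrite mem_rcons inE size_edges => /orP [/eqP->//|Hx].
  have [Hk|Hk] := ltnP k.-1 (size (rrh_edges s)).
    by apply: leqW; apply: IH Hx; apply: mem_nth.
  by move: Hx; rewrite nth_default.
by move=> Hx; apply: leqW; apply: IH He Hx.
Qed.

Lemma degree_rcons s k v : rrh_degree (rcons s k) v =
  rrh_degree s v + ((v == (size s).+2) || (v \in nth [::] (rrh_edges s) k.-1)).
Proof.
by rewrite /rrh_degree /rrh_edges foldl_rcons -/(rrh_edges s) /rrh_step
  -cats1 count_cat /= addn0 mem_rcons inE size_edges.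
Qed.

Lemma degree_new s v : (size s).+1 < v -> rrh_degree s v = 0.
Proof.
move=> Hv; rewrite /rrh_degree; apply/eqP; rewrite -leqn0 leqNgt -has_count.
apply/hasP => [[e He Hve]]; have := edges_bound _ _ _ He Hve; lia.
Qed.
Lemma countA (D d : nat) (bs : seq bool) :
  count (fun b : bool => D + b == d.+1) bs =
  (D == d) * count id bs + (D == d.+1) * count negb bs.
Proof.
elim: bs => [|b bs IH] /=; first by rewrite !muln0.
rewrite IH; case: b => /=; do ! case: eqP => ? /=; lia.
Qed.

Lemma countB (E : seq (seq nat)) v :
  count (fun k => v \in nth [::] E k.-1) (iota 1 (size E)) = count (fun e => v \in e) E.
Proof.
rewrite (iotaDl 1 0) count_map.
transitivity (count (fun e => v \in e) (mkseq (nth [::] E) (size E))); last by rewrite mkseq_nth.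
by rewrite /mkseq count_map; apply: eq_count => k.
Qed.

Lemma per_s s n v d : size s = n -> v <= n.+1 ->
  count (fun k => rrh_degree (rcons s k) v == d.+1) (iota 1 n.+1) =
  (rrh_degree s v == d) * d + (rrh_degree s v == d.+1) * (n - d).
Proof.
move=> Hs Hv.
have E1 : forall k, rrh_degree (rcons s k) v =
   rrh_degree s v + (v \in nth [::] (rrh_edges s) k.-1).
  move=> k; rewrite degree_rcons.
  by have -> : (v == (size s).+2) = false by apply/eqP; lia.
rewrite (eq_count (a2 := fun k => rrh_degree s v + (v \in nth [::] (rrh_edges s) k.-1) == d.+1)); last by move=> k; rewrite E1.
rewrite -(count_map (fun k => v \in nth [::] (rrh_edges s) k.-1)
  (fun b : bool => rrh_degree s v + b == d.+1)).
rewrite countA.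
have Hc : count id [seq v \in nth [::] (rrh_edges s) k.-1 | k <- iota 1 n.+1] = rrh_degree s v.
  by rewrite count_map -Hs -size_edges countB.
have Hn : count negb [seq v \in nth [::] (rrh_edges s) k.-1 | k <- iota 1 n.+1] = n.+1 - rrh_degree s v.
  rewrite -Hc; set L := map _ _.
  have H := count_predC id L; rewrite size_map size_iota in H.
  by rewrite -H addKn.
rewrite Hc Hn.
do ! case: eqP => ? /=; lia.
Qed.

Definition cnt n v d := count (fun s => rrh_degree s v == d) (choice_seqs n).

Lemma cnt_rec n v d : v <= n.+1 ->
  cnt n.+1 v d.+1 = d * cnt n v d + (n - d) * cnt n v d.+1.
Proof.
move=> Hv; rewrite /cnt.
have -> : choice_seqs n.+1 = [seq rcons s k | s <- choice_seqs n, k <- iota 1 n.+1] by [].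
have E : forall a S, [seq rcons s k | s <- a::S, k <- iota 1 n.+1] = map (rcons a) (iota 1 n.+1) ++ [seq rcons s k | s <- S, k <- iota 1 n.+1] by [].
have : forall s, s \in choice_seqs n -> size s = n by move=> s; apply: size_choice.
elim: (choice_seqs n) => [|a S IH] HS; first by rewrite /= !muln0.
rewrite E count_cat count_map per_s; last by []; last by apply: HS; rewrite inE eqxx.
rewrite IH; last by move=> s Hs; apply: HS; rewrite inE Hs orbT.
do ! case: eqP => ? /=; lia.
Qed.

Lemma cnt_base n d : cnt n.+1 n.+2 d = (d == 1) * (n.+1)`!.
Proof.
rewrite /cnt -size_choice_seqs.
have : forall s, s \in choice_seqs n.+1 -> rrh_degree s n.+2 = 1.
  move=> s /allpairsP [[s' k] [Hs _ ->]]; rewrite /fst /snd in Hs *.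
  rewrite degree_rcons degree_new; last by rewrite (size_choice _ _ Hs).
  by rewrite (size_choice _ _ Hs) eqxx.
elim: (choice_seqs n.+1) => [|a S IH] HS /=; first by rewrite muln0.
rewrite HS ?inE ?eqxx // IH; last by move=> s Hs; apply: HS; rewrite inE Hs orbT.
case: (d =P 1) => [->|Hd] /=; first lia.
have -> : (1 == d) = false by apply/eqP; lia. by [].
Qed.

Lemma helpR1 (d e x y z : nat) : d * (x * y * z) + x * y * ((e + 1) * z) = x * ((d + e + 1) * y) * z.
Proof. ring. Qed.
Lemma helpR2 (p e x y z : nat) : (p + e).+1 * (x * y * z) = x * y * ((p + e).+1 * z).
Proof. rewrite -[(p+e).+1]addn1; ring. Qed.

Lemma cnt_closed p j d : 0 < d ->
  cnt (p+j).+1 (p+2) d = (d <= j.+1) * ((p.+1)`! * j`! * 'C(p + j.+1 - d, p)).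
Proof.
elim: j d => [|j IH] d Hd.
  rewrite addn0 (_ : p + 2 = p.+2); last by rewrite addn2.
  rewrite cnt_base; case: d Hd => [//|[|d]] _.
    by rewrite addn1 subn1 /= binn fact0 !muln1 mul1n.
  by [].
case: d Hd => [//|d] _.
rewrite addnS cnt_rec; last by lia.
have T1 : d * cnt (p+j).+1 (p+2) d = d * ((d <= j.+1) * ((p.+1)`! * j`! * 'C(p + j.+1 - d, p))).
  by case: d => [|d]; [rewrite !mul0n | rewrite IH].
rewrite T1 IH //.
set F := (p.+1)`!.
case: (ltngtP d j.+1) => H.
- have [e Ej] : exists e, j = d + e by exists (j - d); lia.
  subst j.
  have -> : (d < (d + e).+2) = true by lia.
  have -> : p + (d + e).+1 - d = (p + e).+1 by lia.
  have -> : p + (d + e).+1 - d.+1 = p + e by lia.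
  have -> : (p + (d + e)).+1 - d = (p + e).+1 by lia.
  have -> : p + (d + e).+2 - d.+1 = (p + e).+1 by lia.
  have Hb := mul_bin_down (p + e).+1 p.
  rewrite (_ : (p + e).+1 - p = e.+1) in Hb; last by lia.
  rewrite /= in Hb.
  rewrite factS !mul1n.
  have -> : (p + e).+1 * (F * (d + e)`! * 'C(p + e, p)) = F * (d + e)`! * ((p + e).+1 * 'C(p + e, p)) by apply: helpR2.
  rewrite Hb; move: F ((d + e)`!) ('C((p + e).+1, p)) => x y z; rewrite -[e.+1]addn1 -[(d + e).+1]addn1; apply: helpR1.
- have -> : (d < j.+2) = false by lia.
  by rewrite /= !(mul0n, muln0).
- subst d.
  have -> : (j.+1 < j.+2) = true by lia.
  have -> : p + j.+1 - j.+1 = p by lia.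
  have -> : p + j.+2 - j.+2 = p by lia.
  rewrite /= binn factS !mul1n !(mul0n, muln0) addn0; move: F (j`!) => x y; rewrite -[j.+1]addn1 !muln1; apply: mulnCA.
Qed.


Lemma nat_key p d e :
  (p.+1)`! * (d + e)`! * 'C(p + e, p) * e`! = p.+1 * ((p + e)`! * (d + e)`!).
Proof.
rewrite -(bin_fact (leq_addr e p)) (addKn p e) factS.
move: (p`!) ((d+e)`!) ('C(p + e, p)) (e`!) => a b c x.
rewrite -[p.+1]addn1; ring.
Qed.

Local Open Scope ring_scope.

Lemma seq_prob_fact (R : numFieldType) s : seq_prob s = ((size s)`!%:R)^-1 :> R.
Proof.
rewrite /seq_prob; elim: (size s) => [|n IH]; first by rewrite big_ord0 fact0 invr1.
rewrite big_ord_recr IH /= factS natrM invfM mulrC.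
by [].
Qed.

Lemma prob_cnt (R : numFieldType) N v d :
  rrh_prob N (fun c => rrh_degree c v == d) =
  ((N.-1)`!%:R)^-1 * (cnt N.-1 v d)%:R :> R.
Proof.
rewrite /rrh_prob /cnt.
have : forall s, s \in choice_seqs N.-1 -> size s = N.-1 by move=> s; apply: size_choice.
elim: (choice_seqs N.-1) => [|a S IH] HS; first by rewrite big_nil mulr0.
rewrite big_cons IH; last by move=> s Hs; apply: HS; rewrite inE Hs orbT.
rewrite seq_prob_fact HS ?inE ?eqxx //= natrD mulrDr.
by [].
Qed.

Lemma fact_neq0 (R : numFieldType) n : (n`!%:R : R) != 0.
Proof. by rewrite pnatr_eq0 -lt0n fact_gt0. Qed.

Lemma part1 (R : realFieldType) (m N d : nat) : (2 <= m)%N -> (m <= N)%N -> (1 <= d)%N ->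
     (d <= N - m + 1)%N ->
     rrh_prob N (fun c => rrh_degree c m == d) =
       (m - 1)%:R * (GammaN (N - d) * GammaN (N - m + 1))
         / (GammaN (N + 2 - d - m) * GammaN N) :> R.
Proof.
move=> Hm HN Hd1 Hd2.
have [p Ep] : exists p, m = (p + 2)%N by exists (m - 2)%N; lia.
have [d' Ed] : exists d', d = d'.+1 by exists d.-1; lia.
have [e Ee] : exists e, N = (p + 2 + d' + e)%N by exists (N - m - d')%N; lia.
subst m d N.
rewrite prob_cnt /GammaN.
have -> : (p + 2 + d' + e).-1 = (p + (d' + e)).+1 by lia.
rewrite cnt_closed //.
have -> : (d'.+1 <= (d' + e).+1)%N = true by lia.
have -> : (p + (d' + e).+1 - d'.+1)%N = (p + e)%N by lia.
have -> : (p + 2 - 1)%N = p.+1 by lia.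
have -> : (p + 2 + d' + e - d'.+1).-1 = (p + e)%N by lia.
have -> : (p + 2 + d' + e - (p + 2) + 1).-1 = (d' + e)%N by lia.
have -> : (p + 2 + d' + e + 2 - d'.+1 - (p + 2)).-1 = e by lia.
have key := nat_key p d' e.
have keyR : ((p.+1)`! * (d' + e)`! * 'C(p + e, p))%:R * (e`!)%:R
   = (p.+1)%:R * (((p + e)`!)%:R * ((d' + e)`!)%:R) :> R.
  by rewrite -!natrM key.
rewrite -keyR mul1n.
have H1 := fact_neq0 R e.
have H2 := fact_neq0 R (p + (d' + e)).+1.
field.
by rewrite H1 H2.
Qed.

Lemma opn_neq0 (R : realFieldType) k : (1 + k%:R : R) != 0.
Proof. have h := ler0n R k; rewrite gt_eqF //; lra. Qed.

Theorem mainTheorem10 (R : realFieldType) :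
  (forall (m N d : nat), (2 <= m)%N -> (m <= N)%N -> (1 <= d)%N ->
     (d <= N - m + 1)%N ->
     rrh_prob N (fun c => rrh_degree c m == d) =
       (m - 1)%:R * (GammaN (N - d) * GammaN (N - m + 1))
         / (GammaN (N + 2 - d - m) * GammaN N) :> R)
  /\ (forall (N d : nat), (2 <= N)%N -> (1 <= d <= N - 1)%N ->
     rrh_prob N (fun c => rrh_degree c 2 == d) = (N - 1)%:R^-1 :> R)
  /\ (forall (N d : nat), (3 <= N)%N -> (1 <= d <= N - 2)%N ->
     rrh_prob N (fun c => rrh_degree c 3 == d) =
       2 * (N - d - 1)%:R / ((N - 1)%:R * (N - 2)%:R) :> R).
Proof.
split; first exact: part1.
split.
- move=> N d HN /andP [Hd1 Hd2].
  rewrite part1 //; last by lia.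
  have [n En] : exists n, N = n.+2 by exists (N - 2)%N; lia.
  subst N.
  rewrite /GammaN.
  have -> : (n.+2 + 2 - d - 2)%N = (n.+2 - d)%N by lia.
  have -> : (n.+2 - 2 + 1).-1 = n by lia.
  have -> : (n.+2 - 1)%N = n.+1 by lia.
  have -> : (2 - 1)%N = 1%N by [].
  rewrite /= factS natrM.
  have H1 := fact_neq0 R (n.+2 - d).-1.
  have H2 := fact_neq0 R n.
  have H3 : (n.+1%:R : R) != 0 by rewrite pnatr_eq0.
  field.
  by rewrite H1 H2 opn_neq0.
- move=> N d HN /andP [Hd1 Hd2].
  rewrite part1 //; last by lia.
  have [d' Ed] : exists d', d = d'.+1 by exists d.-1; lia.
  have [e Ee] : exists e, N = (d' + e).+3 by exists (N - 3 - d')%N; lia.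
  subst N d.
  rewrite /GammaN.
  have -> : ((d' + e).+3 - d'.+1).-1 = e.+1 by lia.
  have -> : ((d' + e).+3 + 2 - d'.+1 - 3).-1 = e by lia.
  have -> : ((d' + e).+3 - 3 + 1).-1 = (d' + e)%N by lia.
  have -> : (3 - 1)%N = 2%N by [].
  have -> : ((d' + e).+3 - d'.+1 - 1)%N = e.+1 by lia.
  have -> : ((d' + e).+3 - 1)%N = (d' + e).+2 by lia.
  have -> : ((d' + e).+3 - 2)%N = (d' + e).+1 by lia.
  rewrite /= !factS !natrM.
  have H1 := fact_neq0 R e.
  have H2 := fact_neq0 R (d' + e).
  have H3 : ((d' + e).+1%:R : R) != 0 by rewrite pnatr_eq0.
  have H4 : ((d' + e).+2%:R : R) != 0 by rewrite pnatr_eq0.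
  field.
  rewrite H1 H2 !andbT; have h1 := ler0n R d'; have h2 := ler0n R e.
  by apply/andP; split; rewrite gt_eqF //; lra.
Qed.
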